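(* Let $G$ and $G'$ be two well-formed abstract GUI states. Then $\mathrm{Eq}(G,G')$ is not derivable if and only if $\mathrm{Ineq}(G,G')$ is derivable.
   Context: Abstract GUI states (AGS) are given by the grammar: a GUI state $G$ is a list of elements $Es$; a list of elements is either the empty list $[]$ or $E : Es$ (head $E$, tail $Es$), and $[E_1,\dots,E_n]$ abbreviates $E_1:\dots:E_n:[]$; an element is a pair $E=(As,Es)$ of a finite set $As$ of attributes and a list $Es$ of child elements; an attribute is a key-value pair $A=(K,V)$ where keys and values are strings. An AGS is well-formed iff for every attribute set $As$ occurring in it (at any depth), the keys of the attributes in $As$ are pairwise distinct. Equality $\mathrm{Eq}$ is the least relation (on element lists, elements, attribute sets and attributes) closed under the rules: (Es-Eq1) $\mathrm{Eq}([],[])$. (Es-Eq2) if $Es=[E_1,\dots,E_n]$, $Es'=[E_1',\dots,E_n']$ and $\mathrm{Eq}(E_i,E_i')$ for $i=1,\dots,n$, then $\mathrm{Eq}(Es,Es')$. (As-Eq1) $\mathrm{Eq}(\{\},\{\})$. (As-Eq2) if $As=\{A_1,\dots,A_n\}$, $As'=\{A_1',\dots,A_n'\}$ and $\mathrm{Eq}(A_i,A_i')$ for $i=1,\dots,n$, then $\mathrm{Eq}(As,As')$. (E-Eq) if $\mathrm{Eq}(As,As')$ and $\mathrm{Eq}(Es,Es')$, then $\mathrm{Eq}((As,Es),(As',Es'))$. (A-Eq) if $K=K'$ and $V=V'$, then $\mathrm{Eq}((K,V),(K',V'))$. Inequality $\mathrm{Ineq}$ is the least relation closed under the rules: (Es-Ineq)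 if $Es=[E_1,\dots,E_n]$, $Es'=[E_1',\dots,E_m']$ and ($n\neq m$ or there is $i\in\{1,\dots,\max(n,m)\}$ with $\mathrm{Ineq}(E_i,E_i')$), then $\mathrm{Ineq}(Es,Es')$. (As-Ineq) if $As=\{A_1,\dots,A_n,B_1,\dots,B_m\}\cup\{(K_1,V_1),\dots,(K_p,V_p)\}$ and $As'=\{A_1',\dots,A_n',B_1',\dots,B_m'\}\cup\{(K_1',V_1'),\dots,(K_q',V_q')\}$, with $\mathrm{Eq}(A_i,A_i')$ for $i=1,\dots,n$, $\mathrm{Ineq}(B_j,B_j')$ for $j=1,\dots,m$, $\{K_1,\dots,K_p\}\cap\{K_1',\dots,K_q'\}=\emptyset$, and ($\max(p,q)\ge 1$ or $m\ge 1$), then $\mathrm{Ineq}(As,As')$. (E-Ineq) if $\mathrm{Ineq}(As,As')$ or $\mathrm{Ineq}(Es,Es')$, then $\mathrm{Ineq}((As,Es),(As',Es'))$. (A-Ineq) if $K=K'$ and $V\neq V'$, then $\mathrm{Ineq}((K,V),(K',V'))$. For GUI states (which are element lists), $\mathrm{Eq}(G,G')$ and $\mathrm{Ineq}(G,G')$ are the corresponding relations on element lists. *)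

(* Defs.v *)
From Stdlib Require Import String List Permutation.
Import ListNotations.

Definition key := string.
Definition value := string.
Definition attr : Type := (key * value)%type.

(* A finite set of attributes is represented by a list; the set
   {A_1,...,A_n} (with the A_i listed without repetition) corresponds to any
   permutation of [A_1;...;A_n].  Well-formedness (distinct keys) makes the
   lists duplicate-free, so this representation is canonical up to order. *)
Definition attrs : Type := list attr.

Inductive elem : Type :=
| Elem : attrs -> list elem -> elem.

Definition gui : Type := list elem.

Inductive wf_elem : elem -> Prop :=
| wf_Elem : forall (As : attrs) (Es : list elem),
    NoDup (map fst As) ->
    (forall e, In e Es -> wf_elem e) ->
    wf_elem (Elem As Es).

Definition wf_gui (G : gui) : Prop := forall e, In e G -> wf_elem e.

Inductive EqA : attr -> attr -> Prop :=
| A_Eq : forall K V K' V', K = K' -> V = V' -> EqA (K, V) (K', V').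

Inductive EqAs : attrs -> attrs -> Prop :=
| As_Eq1 : EqAs [] []
| As_Eq2 : forall (As As' L L' : attrs),
    Permutation As L -> Permutation As' L' ->
    Forall2 EqA L L' ->
    EqAs As As'.

Inductive EqEs : list elem -> list elem -> Prop :=
| Es_Eq1 : EqEs [] []
| Es_Eq2 : forall (Es Es' : list elem),
    length Es = length Es' ->
    (forall i e e', nth_error Es i = Some e -> nth_error Es' i = Some e' ->
                    EqE e e') ->
    EqEs Es Es'
with EqE : elem -> elem -> Prop :=
| E_Eq : forall As As' Es Es',
    EqAs As As' -> EqEs Es Es' -> EqE (Elem As Es) (Elem As' Es').

Inductive IneqA : attr -> attr -> Prop :=
| A_Ineq : forall K V K' V', K = K' -> V <> V' -> IneqA (K, V) (K', V').

(* (As-Ineq): As = {A_i} u {B_j} u {(K_k,V_k)}, As' likewise (disjoint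
   enumerations), Eq(A_i,A_i'), Ineq(B_j,B_j'), key sets of the last parts
   disjoint, and (max(p,q) >= 1 or m >= 1). *)
Inductive IneqAs : attrs -> attrs -> Prop :=
| As_Ineq : forall (As As' LA LA' LB LB' LK LK' : attrs),
    Permutation As (LA ++ LB ++ LK) ->
    Permutation As' (LA' ++ LB' ++ LK') ->
    Forall2 EqA LA LA' ->
    Forall2 IneqA LB LB' ->
    (forall k, In k (map fst LK) -> ~ In k (map fst LK')) ->
    (1 <= length LK \/ 1 <= length LK' \/ 1 <= length LB) ->
    IneqAs As As'.

Inductive IneqEs : list elem -> list elem -> Prop :=
| Es_Ineq_len : forall (Es Es' : list elem),
    length Es <> length Es' -> IneqEs Es Es'
| Es_Ineq_elem : forall (Es Es' : list elem) (i : nat) (e e' : elem),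
    nth_error Es i = Some e -> nth_error Es' i = Some e' ->
    IneqE e e' -> IneqEs Es Es'
with IneqE : elem -> elem -> Prop :=
| E_Ineq_As : forall As As' Es Es',
    IneqAs As As' -> IneqE (Elem As Es) (Elem As' Es')
| E_Ineq_Es : forall As As' Es Es',
    IneqEs Es Es' -> IneqE (Elem As Es) (Elem As' Es').

(* Main.v *)
Require Import Defs.
From Stdlib Require Import String List Permutation.
From Stdlib Require Import Classical Arith.
Import ListNotations.

Lemma key_conflict (l1 l2 : attrs) x y :
  NoDup (map fst (l1 ++ l2)) -> In x l1 -> In y l2 -> fst x = fst y -> False.
Proof.
  induction l1 as [|a l1 IH]; simpl; [tauto|].
  intros Hnd Hx Hy Hk. inversion Hnd as [|? ? Hnin Hnd']; subst.
  destruct Hx as [<-|Hx].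
  - apply Hnin. rewrite map_app. apply in_or_app; right. rewrite Hk. now apply in_map.
  - eauto.
Qed.

Lemma key_unique (l : attrs) k v v' :
  NoDup (map fst l) -> In (k, v) l -> In (k, v') l -> v = v'.
Proof.
  induction l as [|a l IH]; simpl; [tauto|].
  intros Hnd H1 H2. inversion Hnd as [|? ? Hnin Hnd']; subst.
  destruct H1 as [E1|H1], H2 as [E2|H2]; subst; simpl in *.
  - now inversion E2.
  - exfalso; apply Hnin. change k with (fst (k, v')). now apply in_map.
  - exfalso; apply Hnin. change k with (fst (k, v)). now apply in_map.
  - eauto.
Qed.

Lemma F2_key_r LB LB' x : Forall2 IneqA LB LB' -> In x LB' -> exists z, In z LB /\ fst z = fst x.
Proof.
  induction 1; simpl; [tauto|]. intros [<-|H1].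
  - exists x0; split; auto. destruct H; simpl; auto.
  - destruct (IHForall2 H1) as [w [? ?]]; eauto.
Qed.

Lemma F2_key_l LB LB' x : Forall2 IneqA LB LB' -> In x LB -> exists z, In z LB' /\ fst z = fst x.
Proof.
  induction 1; simpl; [tauto|]. intros [<-|H1].
  - exists y; split; auto. destruct H; simpl; auto.
  - destruct (IHForall2 H1) as [w [? ?]]; eauto.
Qed.

Lemma F2_EqA_eq L L' : Forall2 EqA L L' -> L = L'.
Proof. induction 1; auto. destruct H; subst; auto. Qed.

Lemma F2_EqA_refl L : Forall2 EqA L L.
Proof. induction L as [|[k v] L]; constructor; auto. constructor; auto. Qed.

Lemma nodup_perm (l l' : attrs) : Permutation l l' -> NoDup (map fst l) -> NoDup (map fst l').
Proof. intros P H. eapply Permutation_NoDup; [|exact H]. now apply Permutation_map. Qed.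

Lemma attrs_excl As As' :
  NoDup (map fst As) -> NoDup (map fst As') -> Permutation As As' -> IneqAs As As' -> False.
Proof.
  intros N1 N2 P I. destruct I as [As As' LA LA' LB LB' LK LK' P1 P2 FA FB DK Hne].
  apply F2_EqA_eq in FA; subst LA'.
  assert (NX : NoDup (map fst (LA ++ LB ++ LK))) by (eapply nodup_perm; eauto).
  assert (NY : NoDup (map fst (LA ++ LB' ++ LK'))) by (eapply nodup_perm; eauto).
  assert (XY : forall x, In x (LA ++ LB ++ LK) -> In x (LA ++ LB' ++ LK')).
  { intros x Hx. apply (Permutation_in x P2). apply (Permutation_in x P).
    apply (Permutation_in x (Permutation_sym P1)). auto. }
  assert (YX : forall x, In x (LA ++ LB' ++ LK') -> In x (LA ++ LB ++ LK)).
  { intros x Hx. apply (Permutation_in x P1). apply (Permutation_in x (Permutation_sym P)).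
    apply (Permutation_in x (Permutation_sym P2)). auto. }
  assert (NX2 : NoDup (map fst (LB ++ LK))) by (rewrite map_app in NX; apply NoDup_app_remove_l in NX; assumption).
  assert (NY2 : NoDup (map fst (LB' ++ LK'))) by (rewrite map_app in NY; apply NoDup_app_remove_l in NY; assumption).
  destruct Hne as [H|[H|H]].
  - destruct LK as [|[k v] LK]; simpl in H; [inversion H|].
    assert (Hin : In (k, v) (LA ++ LB' ++ LK')) by (apply XY; rewrite !in_app_iff; simpl; auto).
    rewrite !in_app_iff in Hin. destruct Hin as [Hin|[Hin|Hin]].
    + apply (key_conflict LA (LB ++ (k, v) :: LK) (k, v) (k, v)); auto.
      apply in_or_app; right; simpl; auto.
    + destruct (F2_key_r _ _ _ FB Hin) as [y [Hy Hky]].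
      apply (key_conflict LB ((k, v) :: LK) y (k, v)); simpl; auto.
    + apply (DK k); simpl; auto. change k with (fst (k, v)); now apply in_map.
  - destruct LK' as [|[k v] LK']; simpl in H; [inversion H|].
    assert (Hin : In (k, v) (LA ++ LB ++ LK)) by (apply YX; rewrite !in_app_iff; simpl; auto).
    rewrite !in_app_iff in Hin. destruct Hin as [Hin|[Hin|Hin]].
    + apply (key_conflict LA (LB' ++ (k, v) :: LK') (k, v) (k, v)); auto.
      apply in_or_app; right; simpl; auto.
    + destruct (F2_key_l _ _ _ FB Hin) as [y [Hy Hky]].
      apply (key_conflict LB' ((k, v) :: LK') y (k, v)); simpl; auto.
    + apply (DK k). change k with (fst (k, v)); now apply in_map. simpl; auto.
  - destruct FB as [|b b' LB0 LB0' Hb FB]; simpl in H; [inversion H|].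
    destruct Hb as [k v k' v' <- Hv].
    assert (H1 : In (k, v) (LA ++ ((k, v') :: LB0') ++ LK')) by (apply XY; rewrite !in_app_iff; simpl; auto).
    assert (H2 : In (k, v') (LA ++ ((k, v') :: LB0') ++ LK')) by (rewrite !in_app_iff; simpl; auto).
    apply Hv. exact (key_unique _ k v v' NY H1 H2).
Qed.

Lemma attrs_dec As : forall As', exists LA LB LB' LK LK',
  Permutation As (LA ++ LB ++ LK) /\ Permutation As' (LA ++ LB' ++ LK') /\
  Forall2 IneqA LB LB' /\ (forall k, In k (map fst LK) -> ~ In k (map fst LK')).
Proof.
  induction As as [|[k v] As IH]; intros As'.
  - exists [], [], [], [], As'. simpl. repeat split; auto.
  - destruct (in_dec string_dec k (map fst As')) as [Hk|Hk].
    + apply in_map_iff in Hk. destruct Hk as [[k0 v'] [Ek Hin]]; simpl in Ek; subst k0.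
      apply in_split in Hin. destruct Hin as [l1 [l2 E]]; subst As'.
      destruct (IH (l1 ++ l2)) as [LA [LB [LB' [LK [LK' [P1 [P2 [F D]]]]]]]].
      destruct (string_dec v v') as [<-|Hv].
      * exists ((k, v) :: LA), LB, LB', LK, LK'. repeat split; auto.
        -- simpl; now apply perm_skip.
        -- eapply Permutation_trans; [apply Permutation_sym, Permutation_middle|].
           simpl; now apply perm_skip.
      * exists LA, ((k, v) :: LB), ((k, v') :: LB'), LK, LK'. repeat split; auto.
        -- eapply Permutation_trans; [apply perm_skip, P1|]. apply Permutation_middle.
        -- eapply Permutation_trans; [apply Permutation_sym, Permutation_middle|].
           eapply Permutation_trans; [apply perm_skip, P2|]. apply Permutation_middle.
        -- constructor; auto. constructor; auto.
    + destruct (IH As') as [LA [LB [LB' [LK [LK' [P1 [P2 [F D]]]]]]]].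
      exists LA, LB, LB', ((k, v) :: LK), LK'. repeat split; auto.
      * eapply Permutation_trans; [apply perm_skip, P1|].
        rewrite !app_assoc. apply Permutation_middle.
      * simpl. intros k' [<-|Hk'] Hin; [|now apply (D k')].
        apply Hk. apply (Permutation_in k (Permutation_sym (Permutation_map fst P2))).
        rewrite !map_app, !in_app_iff; auto.
Qed.

Lemma attrs_tot As As' : EqAs As As' \/ IneqAs As As'.
Proof.
  destruct (attrs_dec As As') as [LA [LB [LB' [LK [LK' [P1 [P2 [F D]]]]]]]].
  destruct LB as [|b LB]; [destruct LK as [|x LK]; [destruct LK' as [|y LK']|]|].
  - left. inversion F; subst. simpl in *. rewrite app_nil_r in *.
    apply (As_Eq2 _ _ LA LA); auto. apply F2_EqA_refl.
  - right. eapply (As_Ineq As As' LA LA); eauto. apply F2_EqA_refl. simpl; auto with arith.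
  - right. eapply (As_Ineq As As' LA LA); eauto. apply F2_EqA_refl. simpl; auto with arith.
  - right. eapply (As_Ineq As As' LA LA); eauto. apply F2_EqA_refl. simpl; auto with arith.
Qed.

Lemma EqAs_perm As As' : EqAs As As' -> Permutation As As'.
Proof.
  destruct 1; auto. apply F2_EqA_eq in H1; subst.
  eapply Permutation_trans; eauto. now apply Permutation_sym.
Qed.

Fixpoint elem_ind' (P : elem -> Prop)
  (H : forall As Es, (forall e, In e Es -> P e) -> P (Elem As Es)) (e : elem) : P e :=
  match e with
  | Elem As Es => H As Es
      ((fix go (l : list elem) : forall x, In x l -> P x :=
          match l with
          | [] => fun x (h : In x []) => False_ind _ h
          | y :: l' => fun x h =>
              match h with
              | or_introl eq => eq_ind y P (elem_ind' P H y) x eq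
              | or_intror h' => go l' x h'
              end
          end) Es)
  end.

Definition PE (e : elem) : Prop := forall e',
  (EqE e e' \/ IneqE e e') /\ (wf_elem e -> wf_elem e' -> EqE e e' -> IneqE e e' -> False).

Lemma list_lemma Es (IH : forall x, In x Es -> PE x) : forall Es',
  (EqEs Es Es' \/ IneqEs Es Es') /\
  ((forall x, In x Es -> wf_elem x) -> (forall x, In x Es' -> wf_elem x) ->
   EqEs Es Es' -> IneqEs Es Es' -> False).
Proof.
  intros Es'. split.
  - destruct (Nat.eq_dec (length Es) (length Es')) as [L|L]; [|right; now constructor].
    destruct (classic (IneqEs Es Es')) as [I|I]; [now right|left].
    apply Es_Eq2; auto. intros i e e' H1 H2.
    destruct (proj1 (IH e (nth_error_In _ _ H1) e')) as [?|?]; auto.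
    exfalso; apply I; eapply Es_Ineq_elem; eauto.
  - intros W1 W2 E I. inversion E; subst.
    + inversion I; subst; auto. destruct i; discriminate.
    + inversion I; subst; auto.
      apply (proj2 (IH e (nth_error_In _ _ H1) e')); eauto using nth_error_In.
Qed.

Lemma main_elem : forall e, PE e.
Proof.
  apply elem_ind'. intros As Es IH [As' Es'].
  destruct (list_lemma Es IH Es') as [T X]. split.
  - destruct (attrs_tot As As') as [A|A]; [|right; now constructor].
    destruct T as [T|T]; [left; now constructor|right; now apply E_Ineq_Es].
  - intros W1 W2 E I. inversion W1; inversion W2; inversion E; subst.
    inversion I; subst.
    + exact (attrs_excl As As' H1 H5 (EqAs_perm _ _ H10) H0).
    + eauto.
Qed.

Theorem mainTheorem1 (G G' : gui) :
  wf_gui G -> wf_gui G' -> (~ EqEs G G' <-> IneqEs G G').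
Proof.
  intros W1 W2.
  destruct (list_lemma G (fun x _ => main_elem x) G') as [T X]. split.
  - intros N. destruct T; tauto.
  - intros I E. eauto.
Qed.
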